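(* For all positive integers $k$, $$\sum_{n\ge0}\big|\mathcal A_{2n}^{(k)}\big|\,x^{2n+1}=(-1)^k\frac{x}{U_{2k}(x/2)}.$$
   Context: For integers $n\ge0$ and $k\ge1$, $\mathcal A_n^{(k)}$ is the set of all integer sequences $(a_1,\dots,a_n)$ with $1\le a_i\le k$ for all $i$ and $a_1\le a_2\ge a_3\le a_4\ge\cdots$ (i.e. $a_{2j-1}\le a_{2j}$ and $a_{2j}\ge a_{2j+1}$ whenever defined); $\mathcal A_0^{(k)}$ consists of the empty sequence only. $U_n$ is the Chebyshev polynomial of the second kind ($U_0=1$, $U_1(x)=2x$, $U_{n+1}(x)=2xU_n(x)-U_{n-1}(x)$). *)

(* Defs.v *)
From mathcomp Require Import all_boot all_order all_algebra.
Set Implicit Arguments. Unset Strict Implicit. Unset Printing Implicit Defensive.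
Import GRing.Theory Num.Theory.
Local Open Scope ring_scope.

(* Alternating condition a_1 <= a_2 >= a_3 <= a_4 >= ... on a sequence
   (0-based: s_i <= s_{i+1} for even i, s_i >= s_{i+1} for odd i). *)
Fixpoint alt_from (up : bool) (s : seq nat) : bool :=
  match s with
  | x :: ((y :: _) as t) => (if up then (x <= y)%N else (y <= x)%N) && alt_from (~~ up) t
  | _ => true
  end.
Definition alternating (s : seq nat) : bool := alt_from true s.

(* The sequence (a_1,...,a_n) encoded by f : 'I_n -> 'I_k, with a_i = f(i) + 1 in [1,k]. *)
Definition seq_of (n k : nat) (f : {ffun 'I_n -> 'I_k}) : seq nat :=
  [seq (val (f i)).+1 | i <- enum 'I_n].

Definition A_set (n k : nat) : {set {ffun 'I_n -> 'I_k}} :=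
  [set f | alternating (seq_of f)].
Definition A_card (n k : nat) : nat := #|A_set n k|.

Fixpoint chebU_aux (R : nzRingType) (n : nat) : {poly R} * {poly R} :=
  (* returns (U_n, U_{n+1}) *)
  match n with
  | 0 => (1, 2%:R *: 'X)
  | m.+1 => let p := chebU_aux R m in (p.2, 2%:R *: 'X * p.2 - p.1)
  end.
Definition chebU (R : nzRingType) (n : nat) : {poly R} := (chebU_aux R n).1.

(* Coefficients of the formal power series  sum_{n>=0} |A_{2n}^{(k)}| x^{2n+1}. *)
Definition gf_coef (k m : nat) : rat :=
  if odd m then (A_card m.-1 k)%:R else 0.

Definition U2k_half (k : nat) : {poly rat} := chebU rat (2 * k) \Po (2%:R^-1 *: 'X).

(* Main.v *)
Require Import Defs.
From mathcomp Require Import all_boot all_order all_algebra.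
From mathcomp Require Import ring lra zify.
Import GRing.Theory Num.Theory.

Fixpoint allseqs (K n : nat) : seq (seq nat) :=
  if n is n'.+1 then [seq y :: s | y <- iota 1 K, s <- allseqs K n']
  else [:: [::]].

Lemma mem_allseqs K n s : (s \in allseqs K n) = (size s == n) && all (fun x => (0 < x <= K)%N) s.
Proof.
elim: n s => [|n IH] [|x s] //=.
- apply/allpairsP => -[[y u] /= [_ _]] //.
- apply/allpairsP/andP => [[[y u] /= [Hy Hu [-> ->]]]|[Hs /andP[Hx Ha]]].
    move: Hy; rewrite mem_iota => /andP[H1 H2]; move: Hu; rewrite IH => /andP[Hs Ha].
    by rewrite /= eqSS Hs Ha; split=> //; apply/andP; split; lia.
  exists (x, s) => /=; split=> //; first by rewrite mem_iota; lia.
  by rewrite IH -(eqSS (size s)) Hs.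
Qed.

Lemma uniq_allseqs K n : uniq (allseqs K n).
Proof.
elim: n => [|n IH] //=; apply: allpairs_uniq => //; first exact: iota_uniq.
by move=> [a b] [c d] _ _ /= [-> ->].
Qed.

Lemma count_allpairs (P : pred (seq nat)) (ys : seq nat) (L : seq (seq nat)) :
  count P [seq y :: s | y <- ys, s <- L] = \sum_(y <- ys) count (fun s => P (y :: s)) L.
Proof.
elim: ys => [|y ys IH]; first by rewrite big_nil.
by rewrite allpairs_cons count_cat IH big_cons count_map.
Qed.

Lemma card_A K n : A_card n K.+1 = count alternating (allseqs K.+1 n).
Proof.
rewrite /A_card /A_set cardsE cardE /enum_mem size_filter.
rewrite -(count_map (@seq_of n K.+1) alternating).
apply/permP/uniq_perm.
- rewrite map_inj_uniq; first by rewrite -enumT enum_uniq.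
  move=> f g /eq_in_map H; apply/ffunP => i.
  by apply/val_inj; have /= [] := H i (mem_enum _ i).
- exact: uniq_allseqs.
move=> s; rewrite mem_allseqs; apply/mapP/andP.
- move=> [f _ ->]; rewrite /seq_of size_map size_enum_ord; split=> //.
  by apply/allP => x /mapP[i _ ->]; rewrite ltn0Sn /= ltn_ord.
move=> [/eqP Hs /allP Ha].
exists [ffun i : 'I_n => inord (nth 0%N s i).-1]; first by rewrite mem_index_enum.
apply: (@eq_from_nth _ 0%N); first by rewrite size_map size_enum_ord.
move=> i; rewrite Hs => Hi.
rewrite (nth_map (Ordinal Hi)) ?size_enum_ord //.
have -> : nth (Ordinal Hi) (enum 'I_n) i = Ordinal Hi.
  by apply/val_inj; rewrite /= nth_enum_ord.
rewrite ffunE /= inordK.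
  have : (0 < nth 0%N s i <= K.+1)%N by apply: Ha; rewrite mem_nth // Hs.
  by move=> H; rewrite prednK //; case/andP: H.
have : (0 < nth 0%N s i <= K.+1)%N by apply: Ha; rewrite mem_nth // Hs.
lia.
Qed.

Definition d K n up x := count (fun s => alt_from up (x :: s)) (allseqs K n).

Lemma d_succ K n up x : d K n.+1 up x =
  \sum_(1 <= y < K.+1) (if (if up then (x <= y)%N else (y <= x)%N) then d K n (~~up) y else 0%N).
Proof.
rewrite /d /= count_allpairs /index_iota subSS subn0.
apply: eq_bigr => y _ /=.
case: (if up then _ else _) => //.
by elim: (allseqs K n) => //.
Qed.

Definition c K n x := d K n.*2 false x.

Lemma c_succ K n x : c K n.+1 x =
  \sum_(1 <= y1 < K.+1) (if (y1 <= x)%N then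
     \sum_(1 <= y2 < K.+1) (if (y1 <= y2)%N then c K n y2 else 0%N) else 0%N).
Proof.
rewrite /c doubleS d_succ; apply: eq_bigr => y1 _.
by case: ifP => // _; rewrite d_succ.
Qed.

Definition h K n y := \sum_(y <= y2 < K.+1) c K n y2.
Definition H K n x := \sum_(1 <= y < x.+1) h K n y.

Lemma inner K (F : nat -> nat) y1 : (1 <= y1)%N ->
  \sum_(1 <= y2 < K.+1) (if (y1 <= y2)%N then F y2 else 0%N) = \sum_(y1 <= y2 < K.+1) F y2.
Proof.
move=> Hy; case: (leqP y1 K.+1) => Hk.
- rewrite (big_cat_nat Hy Hk) /= big_nat_cond big1 ?add0n.
    by apply: eq_big_nat => i /andP[-> _].
  by move=> i /andP[/andP[_ Hi] _]; rewrite leqNgt Hi.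
- rewrite [RHS]big_geq ?(ltnW Hk) // big_nat_cond big1 // => i /andP[/andP[_ Hi] _].
  by case: ifP => // Hle; move: (leq_trans Hle (ltnW Hi)); rewrite leqNgt Hk.
Qed.

Lemma h_big K n y : (K < y)%N -> h K n y = 0%N.
Proof. by move=> Hy; rewrite /h big_geq. Qed.

Lemma c_eq K n x : (x <= K.+1)%N -> c K n.+1 x = H K n x.
Proof.
move=> Hx; rewrite c_succ.
rewrite (eq_big_nat _ _ (F2 := fun y1 => if (y1 <= x)%N then h K n y1 else 0%N)); last first.
  move=> i /andP[Hi _]; case: ifP => // _; exact: inner.
rewrite /H.
have -> : \sum_(1 <= y1 < K.+1) (if (y1 <= x)%N then h K n y1 else 0%N) =
          \sum_(1 <= y1 < K.+2) (if (y1 <= x)%N then h K n y1 else 0%N).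
  by rewrite [RHS]big_nat_recr //= h_big // if_same addn0.
have H1 : (1 <= x.+1)%N by [].
have H2 : (x.+1 <= K.+2)%N by [].
rewrite (big_cat_nat H1 H2) /=.
have -> : \sum_(x.+1 <= i < K.+2) (if (i <= x)%N then h K n i else 0%N) = 0%N.
  rewrite big_nat_cond big1 // => i /andP[/andP[Hi _] _]; by rewrite leqNgt Hi.
rewrite addn0; apply: eq_big_nat => i /andP[_ Hi]; by rewrite -ltnS Hi.
Qed.

Lemma c0 K x : c K 0 x = 1%N.
Proof. by []. Qed.

Lemma c_zero K n : c K n.+1 0 = 0%N.
Proof. by rewrite c_eq // /H big_geq. Qed.

Lemma c_top K n : c K n K.+1 = c K n K.
Proof.
case: n => // n; rewrite !c_eq // /H big_nat_recr //= h_big // addn0 //.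
Qed.

Lemma c_rec K n x : (1 <= x <= K)%N ->
  (2 * c K n.+1 x = c K n.+1 x.-1 + c K n.+1 x.+1 + c K n x)%N.
Proof.
move=> /andP[H1 H2].
rewrite !c_eq //; try lia.
have E1 : H K n x = (H K n x.-1 + h K n x)%N.
  by rewrite /H -{1}(prednK H1) big_nat_recr //= prednK.
have E2 : H K n x.+1 = (H K n x + h K n x.+1)%N.
  by rewrite /H big_nat_recr //=.
have E3 : h K n x = (c K n x + h K n x.+1)%N.
  by rewrite /h big_ltn.
lia.
Qed.

Lemma card_c K n : A_card n.*2 K.+1 = c K.+1 n K.+1.
Proof.
rewrite card_A /c /d; apply: eq_in_count => s.
rewrite mem_allseqs => /andP[_ Ha].
case: s Ha => //= y s /andP[/andP[_ Hy] _]; by rewrite Hy.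
Qed.
Local Open Scope ring_scope.

Definition conv (p : {poly rat}) (s : nat -> rat) (m : nat) : rat :=
  \sum_(i < m.+1) p`_i * s (m - i)%N.

Definition shift (s : nat -> rat) (m : nat) : rat := if m is m'.+1 then s m' else 0.

Lemma conv_ext p s1 s2 m : (forall n, s1 n = s2 n) -> conv p s1 m = conv p s2 m.
Proof. by move=> E; apply: eq_bigr => i _; rewrite E. Qed.

Lemma convD p q s m : conv (p + q) s m = conv p s m + conv q s m.
Proof. by rewrite /conv -big_split; apply: eq_bigr => i _; rewrite coefD mulrDl. Qed.

Lemma convB p q s m : conv (p - q) s m = conv p s m - conv q s m.
Proof. by rewrite /conv -sumrB; apply: eq_bigr => i _; rewrite coefB mulrBl. Qed.

Lemma convCM c p s m : conv (c%:P * p) s m = c * conv p s m.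
Proof. by rewrite /conv mulr_sumr; apply: eq_bigr => i _; rewrite coefCM mulrA. Qed.

Lemma convZ c p s m : conv (c *: p) s m = c * conv p s m.
Proof. by rewrite -mul_polyC convCM. Qed.

Lemma conv1 s m : conv 1 s m = s m.
Proof.
rewrite /conv big_ord_recl coef1 /= mul1r subn0 big1 ?addr0 // => i _.
by rewrite coef1 mul0r.
Qed.

Lemma convC c s m : conv c%:P s m = c * s m.
Proof. by rewrite -[c%:P]mulr1 convCM conv1. Qed.

Lemma convX p s m : conv ('X * p) s m = shift (conv p s) m.
Proof.
case: m => [|m]; first by rewrite /conv big_ord1 coefXM mul0r.
rewrite /conv big_ord_recl coefXM /= mul0r add0r.
by apply: eq_bigr => i _; rewrite coefXM /= subSS.
Qed.

Lemma conv0 s m : conv 0 s m = 0.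
Proof. by rewrite /conv big1 // => i _; rewrite coef0 mul0r. Qed.

Fixpoint Raux (j : nat) : {poly rat} * {poly rat} :=
  match j with
  | 0 => (1, 1 - 'X)
  | j'.+1 => let p := Raux j' in (p.2, (2%:R%:P - 'X) * p.2 - p.1)
  end.
Definition Rp j := (Raux j).1.

Lemma Rp0 : Rp 0 = 1. Proof. by []. Qed.
Lemma Rp1 : Rp 1 = 1 - 'X. Proof. by []. Qed.
Lemma RpSS j : Rp j.+2 = (2%:R%:P - 'X) * Rp j.+1 - Rp j. Proof. by []. Qed.

Lemma convRSS j s m : conv (Rp j.+2) s m =
  2%:R * conv (Rp j.+1) s m - shift (conv (Rp j.+1) s) m - conv (Rp j) s m.
Proof. by rewrite RpSS convB mulrBl convB convCM convX. Qed.

Definition spread (s : nat -> rat) (m : nat) : rat := if odd m then s m./2 else 0.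

Lemma conv_spread p s m : conv (p \Po 'X^2) (spread s) m = spread (conv p s) m.
Proof.
elim/poly_ind: p m => [|p c IH] m.
  by rewrite comp_poly0 conv0 /spread conv0 if_same.
have -> : (p * 'X + c%:P) \Po 'X^2 = 'X * ('X * (p \Po 'X^2)) + c%:P.
  by rewrite comp_polyD comp_polyM comp_polyX comp_polyC; ring.
rewrite convD convC !convX.
case: m => [|[|m]] /=.
- by rewrite /spread /= mulr0 addr0.
- rewrite convX /= /spread /= addrC convD convC [p * 'X]mulrC convX /=.
  by rewrite add0r addr0.
- rewrite convX /= IH /spread /= negbK.
  case: (odd m); last by rewrite mulr0 addr0.
  by rewrite convD convC [p * 'X]mulrC convX.
Qed.

Lemma chebSS n : chebU rat n.+2 = 2%:R *: 'X * chebU rat n.+1 - chebU rat n.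
Proof. by []. Qed.

Lemma cheb4 n : chebU rat n.+4 =
  (2%:R *: 'X * (2%:R *: 'X) - 2%:R) * chebU rat n.+2 - chebU rat n.
Proof.
rewrite !chebSS; move: (2%:R *: 'X : {poly rat}) => t; ring.
Qed.

Definition hX : {poly rat} := 2%:R^-1 *: 'X.

Lemma tcomp : (2%:R *: 'X) \Po hX = 'X.
Proof. by rewrite comp_polyZ comp_polyX /hX scalerA mulfV ?scale1r. Qed.

Definition V j := chebU rat (j.*2) \Po hX.

Lemma VSS j : V j.+2 = ('X * 'X - 2%:R) * V j.+1 - V j.
Proof.
rewrite /V !doubleS cheb4 comp_polyB comp_polyM comp_polyB comp_polyM tcomp.
by rewrite -polyC_natr comp_polyC.
Qed.

Lemma V_R j : V j = (-1) ^+ j *: (Rp j \Po 'X^2) /\ V j.+1 = (-1) ^+ j.+1 *: (Rp j.+1 \Po 'X^2).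
Proof.
elim: j => [|j [IH1 IH2]].
  split; first by rewrite /V /= Rp0 comp_polyC comp_polyC scale1r.
  rewrite /V /= Rp1 comp_polyB comp_polyM tcomp comp_polyC comp_polyB comp_polyX -polyC1 comp_polyC.
  rewrite -mul_polyC polyCN polyC1; ring.
split=> //; rewrite VSS IH1 IH2 RpSS comp_polyB comp_polyM comp_polyB comp_polyX comp_polyC.
rewrite -!mul_polyC !exprS !polyCM polyCN polyC1 polyC_natr.
move: (Rp j.+1 \Po _) (Rp j \Po _) ((-1) ^+ j)%:P => a b e; ring.
Qed.

Definition Cx (KK x n : nat) : rat := (c KK n x)%:R.

Lemma Cx_rec KK x n : (1 <= x <= KK)%N ->
  2%:R * Cx KK x n - Cx KK x.-1 n - Cx KK x.+1 n = shift (Cx KK x) n.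
Proof.
move=> Hx; case: n => [|n] /=; rewrite /Cx.
  by rewrite !c0; ring.
have := @c_rec KK n x Hx => /(congr1 (fun t : nat => t%:R : rat)).
move=> /= HH; rewrite !natrD in HH; lra.
Qed.

Lemma Cx_top KK n : Cx KK KK.+1 n = Cx KK KK n.
Proof. by rewrite /Cx c_top. Qed.

Lemma Cx_zero KK n : Cx KK 0 n = (n == 0%N)%:R.
Proof. by case: n => [|n]; rewrite /Cx ?c0 ?c_zero. Qed.

Lemma key K j : (j < K.+1)%N ->
  (forall n, conv (Rp j) (Cx K.+1 K.+1) n = Cx K.+1 (K.+1 - j) n) /\
  (forall n, conv (Rp j.+1) (Cx K.+1 K.+1) n = Cx K.+1 (K.+1 - j.+1) n).
Proof.
elim: j => [_|j IH Hj].
  split=> n; first by rewrite Rp0 conv1 subn0.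
  rewrite Rp1 convB conv1 -[in X in _ - X](mulr1 'X) convX.
  have E : shift (conv 1 (Cx K.+1 K.+1)) n = shift (Cx K.+1 K.+1) n.
    by case: n => //= n; rewrite conv1.
  rewrite E -Cx_rec ?leqnn // Cx_top subSS subn0 /=; ring.
have [_ IH2] := IH (ltnW Hj).
split=> // n.
rewrite convRSS IH2.
have E : shift (conv (Rp j.+1) (Cx K.+1 K.+1)) n = shift (Cx K.+1 (K.+1 - j.+1)) n.
  by case: n => //= n; rewrite IH2.
rewrite E.
set x := (K.+1 - j.+1)%N.
have Hx : (1 <= x <= K.+1)%N by rewrite /x; lia.
have e1 : (K.+1 - j = x.+1)%N by rewrite /x; lia.
have e2 : (K.+1 - j.+2 = x.-1)%N by rewrite /x; lia.
have [_ IH1] := IH (ltnW Hj).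
rewrite -Cx_rec // e2.
have -> : conv (Rp j) (Cx K.+1 K.+1) n = Cx K.+1 x.+1 n.
  by have [IH0 _] := IH (ltnW Hj); rewrite IH0 e1.
ring.
Qed.

Theorem corollary10 (k : nat) : (0 < k)%N ->
  forall m : nat,
    \sum_(i < m.+1) (U2k_half k)`_i * gf_coef k (m - i)
      = if m == 1%N then (-1) ^+ k else 0.
Proof.
case: k => // K _ m.
change (conv (U2k_half K.+1) (gf_coef K.+1) m = if m == 1%N then (-1) ^+ K.+1 else 0).
have -> : U2k_half K.+1 = V K.+1 by rewrite /U2k_half /V mul2n.
rewrite (V_R _).1 convZ.
rewrite (@conv_ext _ _ (spread (Cx K.+1 K.+1))); last first.
  move=> n; rewrite /gf_coef /spread; case: ifP => // Ho.
  rewrite /Cx -card_c; congr (_%:R); congr A_card.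
  by rewrite -{1}(odd_double_half n) Ho add1n.
rewrite conv_spread /spread.
have [_ K2] := @key K K (ltnSn K).
case: m => [|[|m]] //=.
- by rewrite mulr0.
- by rewrite K2 subnn Cx_zero mulr1.
- case: ifP => _; last by rewrite mulr0.
  by rewrite K2 subnn Cx_zero mulr0.
Qed.
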